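(* Fix an STL formula $\varphi$ and $t\in\tau$. Let $V$ be the finite set of pairs $(i,t')$ such that some predicate $s_i-\pi\ge0$ appears in a pair $(s_i-\pi\ge0,\,t')\in E(\varphi,t)$, and set $M=|V|$. Then $\eta(\varphi,S,t)$ depends on $S$ only through the vector $v(S)=(s_i[t'])_{(i,t')\in V}\in[-1,1]^M$; regard it as a function $H$ of $v\in\mathbb{R}^M$, computed by the same recursive formulas. Let $S$ be a signal such that $\eta(\psi,S,t')\neq0$ for every $(\psi,t')\in E(\varphi,t)$. Then there is an open neighborhood $U\subseteq\mathbb{R}^M$ of $v(S)$ on which $H$ is well defined and $C^\infty$. In particular, $\eta(\varphi,\cdot,t)$ is smooth at every signal outside the set where some subformula's robustness vanishes at one of its evaluation times.
   Context: Let $\tau\subseteq\mathbb{R}_{\ge 0}$ be a discrete set of time points (e.g. $\tau=\mathbb{Z}_{\ge0}$). For $t\in\tau$ and $0\le a<b$, write $[t+a,t+b]$ for the set of points $t'\in\tau$ with $t+a\le t'\le t+b$, assumed finite and nonempty, and write $N$ for its cardinality. A signal is a map $S:\tau\to[-1,1]^n$ with components $s_1,\dots,s_n$. STL formulas are generated by $\varphi::=\top\mid\bot\mid\mu\mid\neg\varphi\mid\varphi_1\wedge\cdots\wedge\varphi_m\mid\varphi_1\vee\cdots\vee\varphi_m\mid\mathbf{G}_{[a,b]}\varphi\mid\mathbf{F}_{[a,b]}\varphi$ ($m\ge 2$), where each predicate $\mu$ has the form $s_i-\pi\ge0$ with $i\in\{1,\dots,n\}$ and $\pi\in[-1,1]$.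 For $x\in\mathbb{R}$ put $[x]_+=\max(x,0)$, $[x]_-=\min(x,0)$. AGM robustness $\eta(\varphi,S,t)$ is defined recursively: $\eta(\top,S,t)=1$; $\eta(\bot,S,t)=-1$; $\eta(s_i-\pi\ge0,S,t)=\tfrac12(s_i[t]-\pi)$; $\eta(\neg\varphi,S,t)=-\eta(\varphi,S,t)$. Writing $\eta_j=\eta(\varphi_j,S,t)$: $\eta(\varphi_1\wedge\cdots\wedge\varphi_m,S,t)=\big(\prod_{j=1}^m(1+\eta_j)\big)^{1/m}-1$ if all $\eta_j>0$, and $\frac1m\sum_j[\eta_j]_-$ otherwise; $\eta(\varphi_1\vee\cdots\vee\varphi_m,S,t)=\frac1m\sum_j[\eta_j]_+$ if some $\eta_j>0$, and $1-\big(\prod_{j=1}^m(1-\eta_j)\big)^{1/m}$ otherwise. Writing $\eta_{t'}=\eta(\varphi,S,t')$ for $t'\in[t+a,t+b]$: $\eta(\mathbf{G}_{[a,b]}\varphi,S,t)=\big(\prod_{t'}(1+\eta_{t'})\big)^{1/N}-1$ if all $\eta_{t'}>0$, and $\frac1N\sum_{t'}[\eta_{t'}]_-$ otherwise; $\eta(\mathbf{F}_{[a,b]}\varphi,S,t)=\frac1N\sum_{t'}[\eta_{t'}]_+$ if some $\eta_{t'}>0$, and $1-\big(\prod_{t'}(1-\eta_{t'})\big)^{1/N}$ otherwise (products and sums over $t'\in[t+a,t+b]$). Evaluation pairs: $E(\varphi,t)$ is the smallest set of (formula, time) pairs containing $(\varphi,t)$ and closed under three rules. If $(\neg\psi,t')\in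 E$ then $(\psi,t')\in E$. If $(\psi_1\wedge\cdots\wedge\psi_m,t')$ or $(\psi_1\vee\cdots\vee\psi_m,t')$ is in $E$, then $(\psi_j,t')\in E$ for all $j$. If $(\mathbf{G}_{[a,b]}\psi,t')$ or $(\mathbf{F}_{[a,b]}\psi,t')$ is in $E$, then $(\psi,t'')\in E$ for all $t''\in[t'+a,t'+b]$. *)

(* Defs.v *)
From Stdlib Require Import Reals Lra Lia List.
Import ListNotations.
Open Scope R_scope.

Inductive stl : Type :=
| STop : stl
| SBot : stl
| SPred : nat -> R -> stl            (* SPred i pi  is  s_i - pi >= 0 *)
| SNeg : stl -> stl
| SAnd : list stl -> stl
| SOr : list stl -> stl
| SG : R -> R -> stl -> stl
| SF : R -> R -> stl -> stl.

Fixpoint wf (n : nat) (phi : stl) : Prop :=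
  match phi with
  | STop | SBot => True
  | SPred i pi => (1 <= i <= n)%nat /\ -1 <= pi <= 1
  | SNeg psi => wf n psi
  | SAnd l | SOr l =>
      (2 <= length l)%nat /\
      (fix all (l : list stl) : Prop :=
         match l with nil => True | psi :: l' => wf n psi /\ all l' end) l
  | SG a b psi | SF a b psi => 0 <= a < b /\ wf n psi
  end.

Definition sum_list (l : list R) : R := fold_right Rplus 0 l.
Definition prod_list (l : list R) : R := fold_right Rmult 1 l.
Definition posb (x : R) : bool := if Rlt_dec 0 x then true else false.

(** In the root branches the product is >= 1,
    so Rpower (real power of a positive number) is the usual m-th root. *)
Definition agm_and (xs : list R) : R :=
  let m := INR (length xs) in
  if forallb posb xs
  then Rpower (prod_list (map (fun x => 1 + x) xs)) (/ m) - 1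
  else sum_list (map (fun x => Rmin x 0) xs) / m.

Definition agm_or (xs : list R) : R :=
  let m := INR (length xs) in
  if existsb posb xs
  then sum_list (map (fun x => Rmax x 0) xs) / m
  else 1 - Rpower (prod_list (map (fun x => 1 - x) xs)) (/ m).

(** AGM robustness.  [win t a b] is the (finite) list of time points of
    [t+a, t+b] in tau, and [val i t'] is the value s_i[t'] of the signal. *)
Fixpoint eta (win : R -> R -> R -> list R) (val : nat -> R -> R)
         (phi : stl) (t : R) : R :=
  match phi with
  | STop => 1
  | SBot => -1
  | SPred i pi => (val i t - pi) / 2
  | SNeg psi => - eta win val psi t
  | SAnd l => agm_and (map (fun psi => eta win val psi t) l)
  | SOr l => agm_or (map (fun psi => eta win val psi t) l)
  | SG a b psi => agm_and (map (fun t' => eta win val psi t') (win t a b))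
  | SF a b psi => agm_or (map (fun t' => eta win val psi t') (win t a b))
  end.

(** Evaluation pairs: [inE tau phi t psi t'] means (psi, t') ∈ E(phi, t),
    the smallest set containing (phi,t) closed under the three rules. *)
Inductive inE (tau : R -> Prop) (phi : stl) (t : R) : stl -> R -> Prop :=
| E_root : inE tau phi t phi t
| E_neg : forall psi t', inE tau phi t (SNeg psi) t' -> inE tau phi t psi t'
| E_and : forall l psi t', inE tau phi t (SAnd l) t' -> In psi l ->
            inE tau phi t psi t'
| E_or : forall l psi t', inE tau phi t (SOr l) t' -> In psi l ->
            inE tau phi t psi t'
| E_G : forall a b psi t' t'', inE tau phi t (SG a b psi) t' ->
          tau t'' -> t' + a <= t'' <= t' + b -> inE tau phi t psi t''
| E_F : forall a b psi t' t'', inE tau phi t (SF a b psi) t' ->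
          tau t'' -> t' + a <= t'' <= t' + b -> inE tau phi t psi t''.

Definition pair_eq_dec (p q : nat * R) : {p = q} + {p <> q}.
Proof.
  destruct p as [i x], q as [j y].
  destruct (Nat.eq_dec i j) as [Hij|Hij]; [|right; congruence].
  destruct (Req_EM_T x y) as [Hxy|Hxy]; [left; congruence|right; congruence].
Defined.

Fixpoint idx (L : list (nat * R)) (p : nat * R) : nat :=
  match L with
  | nil => O
  | q :: L' => if pair_eq_dec p q then O else S (idx L' p)
  end.

(** R^M is represented by [nat -> R], only coordinates k < M being relevant. *)
Definition update (x : nat -> R) (k : nat) (h : R) : nat -> R :=
  fun j => if Nat.eq_dec j k then h else x j.

Definition open_in (M : nat) (U : (nat -> R) -> Prop) : Prop :=
  forall x, U x -> exists eps, 0 < eps /\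
    forall y, (forall k, (k < M)%nat -> Rabs (y k - x k) < eps) -> U y.

Definition cont_on (M : nat) (U : (nat -> R) -> Prop) (f : (nat -> R) -> R)
  : Prop :=
  forall x, U x -> forall eps, 0 < eps -> exists delta, 0 < delta /\
    forall y, U y -> (forall k, (k < M)%nat -> Rabs (y k - x k) < delta) ->
      Rabs (f y - f x) < eps.

Definition partial_at (f : (nat -> R) -> R) (k : nat) (x : nat -> R) (l : R)
  : Prop := derivable_pt_lim (fun h => f (update x k h)) (x k) l.

Fixpoint Ck_on (M : nat) (U : (nat -> R) -> Prop) (k : nat)
         (f : (nat -> R) -> R) : Prop :=
  match k with
  | O => cont_on M U f
  | S k' => cont_on M U f /\
      exists g : nat -> (nat -> R) -> R,
        (forall j, (j < M)%nat -> forall x, U x -> partial_at f j x (g j x)) /\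
        (forall j, (j < M)%nat -> Ck_on M U k' (g j))
  end.

Definition smooth_on (M : nat) (U : (nat -> R) -> Prop) (f : (nat -> R) -> R)
  : Prop := forall k, Ck_on M U k f.

(* Main.v *)
Require Import Defs.
From Stdlib Require Import Reals List Lra Lia FunctionalExtensionality.
Import ListNotations.
Open Scope R_scope.

Lemma update_same x j : update x j (x j) = x.
Proof. apply functional_extensionality; intro k; unfold update; destruct (Nat.eq_dec k j); subst; auto. Qed.

Lemma cont_const M U c : cont_on M U (fun _ => c).
Proof. intros x _ eps He. exists 1; split; [lra|]. intros. rewrite Rminus_diag, Rabs_R0; lra. Qed.

Lemma cont_proj M U m : (m < M)%nat -> cont_on M U (fun v => v m).
Proof. intros Hm x _ eps He. exists eps; split; auto. Qed.

Lemma cont_plus M U f g : cont_on M U f -> cont_on M U g -> cont_on M U (fun v => f v + g v).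
Proof.
  intros Hf Hg x Hx eps He.
  destruct (Hf x Hx (eps/2)) as [d1 [Hd1 H1]]; [lra|].
  destruct (Hg x Hx (eps/2)) as [d2 [Hd2 H2]]; [lra|].
  exists (Rmin d1 d2); split; [apply Rmin_pos; auto|].
  intros y Hy Hk.
  assert (A1 := H1 y Hy (fun k hk => Rlt_le_trans _ _ _ (Hk k hk) (Rmin_l _ _))).
  assert (A2 := H2 y Hy (fun k hk => Rlt_le_trans _ _ _ (Hk k hk) (Rmin_r _ _))).
  replace (f y + g y - (f x + g x)) with ((f y - f x) + (g y - g x)) by ring.
  eapply Rle_lt_trans; [apply Rabs_triang|]. lra.
Qed.

Lemma cont_mult M U f g : cont_on M U f -> cont_on M U g -> cont_on M U (fun v => f v * g v).
Proof.
  intros Hf Hg x Hx eps He.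
  set (A := Rabs (g x) + 1). set (B := Rabs (f x) + 1).
  assert (HA : 0 < A) by (unfold A; pose proof (Rabs_pos (g x)); lra).
  assert (HB : 0 < B) by (unfold B; pose proof (Rabs_pos (f x)); lra).
  destruct (Hf x Hx (eps/(2*A))) as [d1 [Hd1 H1]]. { apply Rdiv_lt_0_compat; lra. }
  destruct (Hg x Hx (eps/(2*B))) as [d2 [Hd2 H2]]. { apply Rdiv_lt_0_compat; lra. }
  destruct (Hg x Hx 1) as [d3 [Hd3 H3]]; [lra|].
  exists (Rmin d1 (Rmin d2 d3)); split. { repeat apply Rmin_pos; auto. }
  intros y Hy Hk.
  assert (A1 := H1 y Hy (fun k hk => Rlt_le_trans _ _ _ (Hk k hk) (Rmin_l _ _))).
  assert (A2 : Rabs (g y - g x) < eps/(2*B)).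
  { apply H2; auto. intros k hk. eapply Rlt_le_trans; [apply Hk; auto|].
    eapply Rle_trans; [apply Rmin_r|apply Rmin_l]. }
  assert (A3 : Rabs (g y - g x) < 1).
  { apply H3; auto. intros k hk. eapply Rlt_le_trans; [apply Hk; auto|].
    eapply Rle_trans; [apply Rmin_r|apply Rmin_r]. }
  assert (Gy : Rabs (g y) <= A).
  { unfold A. replace (g y) with ((g y - g x) + g x) by ring.
    eapply Rle_trans; [apply Rabs_triang|]. lra. }
  replace (f y * g y - f x * g x) with ((f y - f x) * g y + f x * (g y - g x)) by ring.
  eapply Rle_lt_trans; [apply Rabs_triang|]. rewrite !Rabs_mult.
  assert (T1 : Rabs (f y - f x) * Rabs (g y) <= eps/(2*A) * A).
  { apply Rmult_le_compat; auto using Rabs_pos; lra. }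
  assert (T2 : Rabs (f x) * Rabs (g y - g x) <= Rabs (f x) * (eps/(2*B))).
  { apply Rmult_le_compat_l; auto using Rabs_pos; lra. }
  assert (T3 : Rabs (f x) * (eps/(2*B)) < B * (eps/(2*B))).
  { apply Rmult_lt_compat_r. apply Rdiv_lt_0_compat; lra. unfold B; lra. }
  replace (eps/(2*A)*A) with (eps/2) in T1 by (field; lra).
  replace (B*(eps/(2*B))) with (eps/2) in T3 by (field; lra).
  lra.
Qed.

Lemma cont_comp M U (phi : R -> R) f : cont_on M U f ->
  (forall x, U x -> continuity_pt phi (f x)) -> cont_on M U (fun v => phi (f v)).
Proof.
  intros Hf Hphi x Hx eps He.
  destruct (Hphi x Hx eps He) as [a [Ha Hphia]].
  destruct (Hf x Hx a Ha) as [d [Hd H]].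
  exists d; split; auto. intros y Hy Hk.
  destruct (Req_dec (f y) (f x)) as [E|E]. { rewrite E, Rminus_diag, Rabs_R0; lra. }
  apply (Hphia (f y)). split. { split; [constructor| auto]. } simpl. unfold R_dist. apply H; auto.
Qed.

Lemma dpl_local (f g : R -> R) x l eps : 0 < eps ->
  (forall h, Rabs (h - x) < eps -> f h = g h) -> derivable_pt_lim g x l -> derivable_pt_lim f x l.
Proof.
  intros He Heq Hg e He'. destruct (Hg e He') as [d Hd].
  assert (Hp : 0 < Rmin d eps) by (apply Rmin_pos; [apply cond_pos|auto]).
  exists (mkposreal _ Hp). intros h Hh0 Hh. simpl in Hh.
  rewrite (Heq x), (Heq (x+h)). apply Hd; auto. eapply Rlt_le_trans; [apply Hh|apply Rmin_l].
  replace (x+h-x) with h by ring; eapply Rlt_le_trans; [apply Hh| apply Rmin_r].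
  rewrite Rminus_diag, Rabs_R0; auto.
Qed.

Lemma Ck_mono M U k f : Ck_on M U (S k) f -> Ck_on M U k f.
Proof.
  revert f; induction k; intros f H.
  - destruct H; auto.
  - destruct H as [Hc [g [Hg1 Hg2]]]. split; auto. exists g; split; auto.
Qed.

Lemma Ck_restrict M U V k f : Ck_on M U k f -> (forall v, V v -> U v) -> Ck_on M V k f.
Proof.
  revert f; induction k; intros f H HV.
  - intros x Hx eps He. destruct (H x (HV x Hx) eps He) as [d [Hd Hd']].
    exists d; split; auto.
  - destruct H as [Hc [g [Hg1 Hg2]]]. split.
    + intros x Hx eps He. destruct (Hc x (HV x Hx) eps He) as [d [Hd Hd']].
      exists d; split; auto.
    + exists g; split; auto.
Qed.

Lemma cont_ext M U f g : (forall x, U x -> f x = g x) -> cont_on M U g -> cont_on M U f.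
Proof.
  intros E Hc x Hx eps He. destruct (Hc x Hx eps He) as [d [Hd Hd']].
  exists d; split; auto. intros y Hy Hk. rewrite (E x), (E y); auto.
Qed.

Lemma Ck_ext M U k f g : open_in M U -> (forall x, U x -> f x = g x) -> Ck_on M U k g -> Ck_on M U k f.
Proof.
  intros HU E H. destruct k as [|k].
  - eapply cont_ext; eauto.
  - destruct H as [Hc [gg [Hg1 Hg2]]]. split. { eapply cont_ext; eauto. }
    exists gg; split; auto. intros j Hj x Hx.
    destruct (HU x Hx) as [eps [He Heps]].
    unfold partial_at. eapply dpl_local; [exact He| |apply Hg1; auto].
    intros h Hh. apply E. apply Heps. intros k' Hk'. unfold update.
    destruct (Nat.eq_dec k' j); subst; auto. rewrite Rminus_diag, Rabs_R0; auto.
Qed.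

Lemma Ck_const M U k c : Ck_on M U k (fun _ => c).
Proof.
  revert c; induction k; intros c.
  - apply cont_const.
  - split; [apply cont_const|]. exists (fun _ _ => 0). split; auto.
    intros j Hj x Hx. unfold partial_at. apply derivable_pt_lim_const.
Qed.

Lemma Ck_proj M U k m : (m < M)%nat -> Ck_on M U k (fun v => v m).
Proof.
  intros Hm. destruct k.
  - apply cont_proj; auto.
  - split; [apply cont_proj; auto|].
    exists (fun j _ => if Nat.eq_dec m j then 1 else 0). split.
    + intros j Hj x Hx. unfold partial_at, update.
      destruct (Nat.eq_dec m j). apply derivable_pt_lim_id. apply derivable_pt_lim_const.
    + intros j Hj. apply Ck_const.
Qed.

Lemma Ck_plus M U k f g : Ck_on M U k f -> Ck_on M U k g -> Ck_on M U k (fun v => f v + g v).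
Proof.
  revert f g; induction k; intros f g Hf Hg.
  - apply cont_plus; auto.
  - destruct Hf as [Hcf [gf [Hf1 Hf2]]]. destruct Hg as [Hcg [gg [Hg1 Hg2]]].
    split; [apply cont_plus; auto|].
    exists (fun j x => gf j x + gg j x). split.
    + intros j Hj x Hx. unfold partial_at.
      apply (derivable_pt_lim_plus (fun h => f (update x j h)) (fun h => g (update x j h))).
      apply Hf1; auto. apply Hg1; auto.
    + intros j Hj. apply IHk; auto.
Qed.

Lemma Ck_mult M U k f g : Ck_on M U k f -> Ck_on M U k g -> Ck_on M U k (fun v => f v * g v).
Proof.
  revert f g; induction k; intros f g Hf Hg.
  - apply cont_mult; auto.
  - pose proof (Ck_mono _ _ _ _ Hf) as Hf0. pose proof (Ck_mono _ _ _ _ Hg) as Hg0.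
    destruct Hf as [Hcf [gf [Hf1 Hf2]]]. destruct Hg as [Hcg [gg [Hg1 Hg2]]].
    split; [apply cont_mult; auto|].
    exists (fun j x => gf j x * g x + f x * gg j x). split.
    + intros j Hj x Hx. unfold partial_at.
      pose proof (derivable_pt_lim_mult (fun h => f (update x j h)) (fun h => g (update x j h))
        _ _ _ (Hf1 j Hj x Hx) (Hg1 j Hj x Hx)) as D.
      simpl in D. rewrite update_same in D. exact D.
    + intros j Hj. apply Ck_plus; apply IHk; auto.
Qed.

Lemma Ck_pow M U k r f : (forall x, U x -> 0 < f x) -> Ck_on M U k f ->
  Ck_on M U k (fun v => Rpower (f v) r).
Proof.
  intros Hpos. revert r f Hpos; induction k; intros r f Hpos Hf.
  - apply (cont_comp M U (fun y => Rpower y r)); auto.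
    intros x Hx. apply derivable_continuous_pt.
    exists (r * Rpower (f x) (r - 1)). apply derivable_pt_lim_power; auto.
  - pose proof (Ck_mono _ _ _ _ Hf) as Hf0.
    destruct Hf as [Hcf [gf [Hf1 Hf2]]].
    split.
    + apply (cont_comp M U (fun y => Rpower y r)); auto.
      intros x Hx. apply derivable_continuous_pt.
      exists (r * Rpower (f x) (r - 1)). apply derivable_pt_lim_power; auto.
    + exists (fun j x => (r * Rpower (f x) (r - 1)) * gf j x). split.
      * intros j Hj x Hx. unfold partial_at.
        assert (P : derivable_pt_lim (fun y => Rpower y r) ((fun h => f (update x j h)) (x j))
                      (r * Rpower (f x) (r-1))).
        { cbv beta; rewrite update_same; apply derivable_pt_lim_power; auto. }
        exact (derivable_pt_lim_comp _ _ _ _ _ (Hf1 j Hj x Hx) P).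
      * intros j Hj. apply Ck_mult; auto. apply Ck_mult. apply Ck_const. apply IHk; auto.
Qed.

Lemma sm_ext M U f g : open_in M U -> (forall x, U x -> f x = g x) -> smooth_on M U g -> smooth_on M U f.
Proof. intros HU E H k. eapply Ck_ext; eauto. Qed.
Lemma sm_eqv M U f g : (forall x, f x = g x) -> smooth_on M U g -> smooth_on M U f.
Proof. intros E H. replace f with g; auto. apply functional_extensionality; intros; auto. Qed.
Lemma sm_const M U c : smooth_on M U (fun _ => c).
Proof. intro k; apply Ck_const. Qed.
Lemma sm_proj M U m : (m < M)%nat -> smooth_on M U (fun v => v m).
Proof. intros H k; apply Ck_proj; auto. Qed.
Lemma sm_plus M U f g : smooth_on M U f -> smooth_on M U g -> smooth_on M U (fun v => f v + g v).
Proof. intros H1 H2 k; apply Ck_plus; auto. Qed.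
Lemma sm_mult M U f g : smooth_on M U f -> smooth_on M U g -> smooth_on M U (fun v => f v * g v).
Proof. intros H1 H2 k; apply Ck_mult; auto. Qed.
Lemma sm_pow M U r f : (forall x, U x -> 0 < f x) -> smooth_on M U f -> smooth_on M U (fun v => Rpower (f v) r).
Proof. intros H1 H2 k; apply Ck_pow; auto. Qed.
Lemma sm_restrict M U V f : smooth_on M U f -> (forall v, V v -> U v) -> smooth_on M V f.
Proof. intros H1 H2 k; eapply Ck_restrict; eauto. Qed.

Lemma sm_sum {A} M U (l : list A) (G : A -> (nat -> R) -> R) :
  (forall a, In a l -> smooth_on M U (G a)) -> smooth_on M U (fun v => sum_list (map (fun a => G a v) l)).
Proof.
  induction l as [|a l IH]; intros H.
  - apply (sm_eqv _ _ _ (fun _ => 0)); [intro; reflexivity|apply sm_const].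
  - apply (sm_eqv _ _ _ (fun v => G a v + sum_list (map (fun a => G a v) l))); [intro; reflexivity|].
    apply sm_plus. apply H; left; auto. apply IH; intros; apply H; right; auto.
Qed.

Lemma sm_prod {A} M U (l : list A) (G : A -> (nat -> R) -> R) :
  (forall a, In a l -> smooth_on M U (G a)) -> smooth_on M U (fun v => prod_list (map (fun a => G a v) l)).
Proof.
  induction l as [|a l IH]; intros H.
  - apply (sm_eqv _ _ _ (fun _ => 1)); [intro; reflexivity|apply sm_const].
  - apply (sm_eqv _ _ _ (fun v => G a v * prod_list (map (fun a => G a v) l))); [intro; reflexivity|].
    apply sm_mult. apply H; left; auto. apply IH; intros; apply H; right; auto.
Qed.

Lemma posb_true x : posb x = true <-> 0 < x.
Proof. unfold posb; destruct (Rlt_dec 0 x); split; intros; auto; discriminate || contradiction. Qed.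
Lemma posb_false x : posb x = false <-> x <= 0.
Proof. unfold posb; destruct (Rlt_dec 0 x); split; intros; auto; try discriminate; lra. Qed.

Lemma forallb_map_true {A} (p : R -> bool) (f : A -> R) l :
  forallb p (map f l) = true <-> forall a, In a l -> p (f a) = true.
Proof. rewrite forallb_forall. split; intros H a Ha. apply H, in_map; auto.
  apply in_map_iff in Ha as [b [<- Hb]]; auto. Qed.
Lemma existsb_map_true {A} (p : R -> bool) (f : A -> R) l :
  existsb p (map f l) = true <-> exists a, In a l /\ p (f a) = true.
Proof. rewrite existsb_exists. split.
  - intros [x [Hx Hp]]. apply in_map_iff in Hx as [b [<- Hb]]; eauto.
  - intros [a [Ha Hp]]. exists (f a); split; auto. apply in_map; auto. Qed.
Lemma forallb_map_false {A} (p : R -> bool) (f : A -> R) l :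
  forallb p (map f l) = false <-> exists a, In a l /\ p (f a) = false.
Proof. split.
  - intros H. induction l as [|b l IH]; simpl in H; [discriminate|].
    destruct (p (f b)) eqn:E; simpl in H.
    + destruct (IH H) as [a [Ha Hp]]; exists a; split; auto; right; auto.
    + exists b; split; auto; left; auto.
  - intros [a [Ha Hp]]. destruct (forallb p (map f l)) eqn:E; auto.
    rewrite forallb_map_true in E. rewrite E in Hp; auto. Qed.
Lemma existsb_map_false {A} (p : R -> bool) (f : A -> R) l :
  existsb p (map f l) = false <-> forall a, In a l -> p (f a) = false.
Proof. split.
  - intros H a Ha. destruct (p (f a)) eqn:E; auto.
    assert (existsb p (map f l) = true) by (apply existsb_map_true; eauto). congruence.
  - intros H. destruct (existsb p (map f l)) eqn:E; auto.
    apply existsb_map_true in E as [a [Ha Hp]]. rewrite H in Hp; auto. Qed.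

Lemma neg_of x y : x * y > 0 -> y <= 0 -> y < 0 /\ x < 0.
Proof. intros. destruct (Req_dec y 0) as [Z|Z]; [rewrite Z in H; lra|]. split; nra. Qed.

Lemma prod_ge1 {A} (l : list A) (P : A -> R) : (forall a, In a l -> 1 < P a) -> 1 <= prod_list (map P l).
Proof. induction l as [|a l IH]; intros H; simpl. lra.
  assert (1 < P a) by (apply H; left; auto).
  assert (1 <= prod_list (map P l)) by (apply IH; intros; apply H; right; auto). nra. Qed.
Lemma prod_gt1 {A} (l : list A) (P : A -> R) : (forall a, In a l -> 1 < P a) -> l <> nil -> 1 < prod_list (map P l).
Proof. destruct l as [|a l]; intros H Hn; [congruence|]. simpl.
  assert (1 < P a) by (apply H; left; auto).
  assert (1 <= prod_list (map P l)) by (apply prod_ge1; intros; apply H; right; auto). nra. Qed.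

Lemma sum_le0 {A} (l : list A) (P : A -> R) : (forall a, In a l -> P a <= 0) -> sum_list (map P l) <= 0.
Proof. induction l as [|a l IH]; intros H; simpl. lra.
  assert (P a <= 0) by (apply H; left; auto).
  assert (sum_list (map P l) <= 0) by (apply IH; intros; apply H; right; auto). lra. Qed.
Lemma sum_lt0 {A} (l : list A) (P : A -> R) : (forall a, In a l -> P a <= 0) ->
  (exists a, In a l /\ P a < 0) -> sum_list (map P l) < 0.
Proof. induction l as [|a l IH]; intros H [b [Hb Hp]]; simpl. destruct Hb.
  assert (P a <= 0) by (apply H; left; auto).
  destruct Hb as [<-|Hb].
  - assert (sum_list (map P l) <= 0) by (apply sum_le0; intros; apply H; right; auto). lra.
  - assert (sum_list (map P l) < 0) by (apply IH; [intros; apply H; right; auto| eauto]). lra. Qed.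
Lemma sum_ge0 {A} (l : list A) (P : A -> R) : (forall a, In a l -> 0 <= P a) -> 0 <= sum_list (map P l).
Proof. induction l as [|a l IH]; intros H; simpl. lra.
  assert (0 <= P a) by (apply H; left; auto).
  assert (0 <= sum_list (map P l)) by (apply IH; intros; apply H; right; auto). lra. Qed.
Lemma sum_gt0 {A} (l : list A) (P : A -> R) : (forall a, In a l -> 0 <= P a) ->
  (exists a, In a l /\ 0 < P a) -> 0 < sum_list (map P l).
Proof. induction l as [|a l IH]; intros H [b [Hb Hp]]; simpl. destruct Hb.
  assert (0 <= P a) by (apply H; left; auto).
  destruct Hb as [<-|Hb].
  - assert (0 <= sum_list (map P l)) by (apply sum_ge0; intros; apply H; right; auto). lra.
  - assert (0 < sum_list (map P l)) by (apply IH; [intros; apply H; right; auto| eauto]). lra. Qed.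

Lemma len_pos {A} (l : list A) : l <> nil -> 0 < INR (length l).
Proof. destruct l; [congruence|]. intros _; simpl length. apply lt_0_INR; lia. Qed.

Lemma Rpower_gt1 x y : 1 < x -> 0 < y -> 1 < Rpower x y.
Proof. intros. rewrite <- (Rpower_O x) by lra. apply Rpower_lt; auto. Qed.

Lemma and_pos {A} (l : list A) f : (forall a, In a l -> 0 < f a) -> l <> nil -> 0 < agm_and (map f l).
Proof. intros H Hn. unfold agm_and.
  replace (forallb posb (map f l)) with true
    by (symmetry; apply forallb_map_true; intros; apply posb_true; auto).
  rewrite map_map, length_map.
  assert (1 < prod_list (map (fun x => 1 + f x) l)) by (apply prod_gt1; auto; intros a Ha; specialize (H a Ha); lra).
  assert (1 < Rpower (prod_list (map (fun x => 1 + f x) l)) (/ INR (length l))).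
  { apply Rpower_gt1; auto. apply Rinv_0_lt_compat, len_pos; auto. } lra. Qed.

Lemma and_neg {A} (l : list A) f : (forall a, In a l -> f a <> 0) -> (exists a, In a l /\ f a < 0) ->
  agm_and (map f l) < 0.
Proof. intros H [b [Hb Hfb]]. unfold agm_and.
  replace (forallb posb (map f l)) with false
    by (symmetry; apply forallb_map_false; exists b; split; auto; apply posb_false; lra).
  rewrite map_map, length_map.
  assert (sum_list (map (fun x => Rmin (f x) 0) l) < 0).
  { apply sum_lt0. intros; apply Rmin_r. exists b; split; auto. eapply Rle_lt_trans; [apply Rmin_l|auto]. }
  assert (0 < / INR (length l)) by (apply Rinv_0_lt_compat, len_pos; intro; subst; destruct Hb).
  unfold Rdiv. nra. Qed.

Lemma or_pos {A} (l : list A) f : (exists a, In a l /\ 0 < f a) -> 0 < agm_or (map f l).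
Proof. intros [b [Hb Hfb]]. unfold agm_or.
  replace (existsb posb (map f l)) with true
    by (symmetry; apply existsb_map_true; exists b; split; auto; apply posb_true; auto).
  rewrite map_map, length_map.
  assert (0 < sum_list (map (fun x => Rmax (f x) 0) l)).
  { apply sum_gt0. intros; apply Rmax_r. exists b; split; auto. eapply Rlt_le_trans; [exact Hfb|apply Rmax_l]. }
  assert (0 < / INR (length l)) by (apply Rinv_0_lt_compat, len_pos; intro; subst; destruct Hb).
  unfold Rdiv. nra. Qed.

Lemma or_neg {A} (l : list A) f : (forall a, In a l -> f a < 0) -> l <> nil -> agm_or (map f l) < 0.
Proof. intros H Hn. unfold agm_or.
  replace (existsb posb (map f l)) with false
    by (symmetry; apply existsb_map_false; intros a Ha; apply posb_false; specialize (H a Ha); lra).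
  rewrite map_map, length_map.
  assert (1 < prod_list (map (fun x => 1 - f x) l)) by (apply prod_gt1; auto; intros a Ha; specialize (H a Ha); lra).
  assert (1 < Rpower (prod_list (map (fun x => 1 - f x) l)) (/ INR (length l))).
  { apply Rpower_gt1; auto. apply Rinv_0_lt_compat, len_pos; auto. } lra. Qed.

Lemma and_sign {A} (l : list A) f e : l <> nil -> (forall a, In a l -> f a * e a > 0) ->
  agm_and (map f l) * agm_and (map e l) > 0.
Proof. intros Hn H.
  destruct (forallb posb (map e l)) eqn:E.
  - rewrite forallb_map_true in E.
    assert (He : forall a, In a l -> 0 < e a) by (intros; apply posb_true; auto).
    assert (Hf : forall a, In a l -> 0 < f a) by (intros a Ha; specialize (H a Ha); specialize (He a Ha); nra).
    pose proof (and_pos l f Hf Hn). pose proof (and_pos l e He Hn). nra.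
  - rewrite forallb_map_false in E. destruct E as [b [Hb Hp]]. apply posb_false in Hp.
    pose proof (H b Hb).
    assert (e b < 0) by (destruct (Req_dec (e b) 0) as [Z|Z]; [rewrite Z in H0; lra|lra]).
    assert (f b < 0) by nra.
    assert (agm_and (map f l) < 0).
    { apply and_neg; eauto. intros a Ha; specialize (H a Ha); intro Z; rewrite Z in H; lra. }
    assert (agm_and (map e l) < 0).
    { apply and_neg; eauto. intros a Ha; specialize (H a Ha); intro Z; rewrite Z in H; lra. }
    nra. Qed.

Lemma or_sign {A} (l : list A) f e : l <> nil -> (forall a, In a l -> f a * e a > 0) ->
  agm_or (map f l) * agm_or (map e l) > 0.
Proof. intros Hn H.
  destruct (existsb posb (map e l)) eqn:E.
  - rewrite existsb_map_true in E. destruct E as [b [Hb Hp]]. apply posb_true in Hp.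
    pose proof (H b Hb) as Hb'. assert (Hfb : 0 < f b) by nra.
    pose proof (or_pos l f (ex_intro _ b (conj Hb Hfb))).
    pose proof (or_pos l e (ex_intro _ b (conj Hb Hp))). nra.
  - rewrite existsb_map_false in E.
    assert (He : forall a, In a l -> e a < 0).
    { intros a Ha. specialize (E a Ha). apply posb_false in E. specialize (H a Ha).
      destruct (Req_dec (e a) 0) as [Z|Z]; [rewrite Z in H; lra| lra]. }
    assert (Hf : forall a, In a l -> f a < 0) by (intros a Ha; specialize (H a Ha); specialize (He a Ha); nra).
    pose proof (or_neg l f Hf Hn). pose proof (or_neg l e He Hn). nra. Qed.

Lemma and_smooth {A} M U (l : list A) (Fa : A -> (nat -> R) -> R) (e : A -> R) :
  open_in M U -> l <> nil ->
  (forall a, In a l -> smooth_on M U (Fa a) /\ forall v, U v -> Fa a v * e a > 0) ->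
  smooth_on M U (fun v => agm_and (map (fun a => Fa a v) l)).
Proof. intros HU Hn H.
  destruct (forallb posb (map e l)) eqn:E.
  - rewrite forallb_map_true in E.
    assert (Hp : forall a v, In a l -> U v -> 0 < Fa a v).
    { intros a v Ha Hv. specialize (E a Ha). apply posb_true in E. destruct (H a Ha) as [_ H2].
      specialize (H2 v Hv). nra. }
    apply (sm_ext _ _ _ (fun v => Rpower (prod_list (map (fun a => 1 + Fa a v) l)) (/ INR (length l)) + -1) HU).
    + intros v Hv. unfold agm_and.
      replace (forallb posb (map (fun a => Fa a v) l)) with true
        by (symmetry; apply forallb_map_true; intros; apply posb_true; auto).
      rewrite map_map, length_map. ring.
    + apply sm_plus; [|apply sm_const]. apply sm_pow.
      * intros v Hv. assert (1 < prod_list (map (fun a => 1 + Fa a v) l)); [|lra].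
        apply prod_gt1; auto. intros a Ha; specialize (Hp a v Ha Hv); lra.
      * apply (sm_prod M U l (fun a v => 1 + Fa a v)). intros a Ha. apply sm_plus. apply sm_const. apply H; auto.
  - rewrite forallb_map_false in E. destruct E as [b [Hb Hpb]]. apply posb_false in Hpb.
    apply (sm_ext _ _ _ (fun v => sum_list (map (fun a => if posb (e a) then 0 else Fa a v) l) * / INR (length l)) HU).
    + intros v Hv. unfold agm_and.
      replace (forallb posb (map (fun a => Fa a v) l)) with false.
      2:{ symmetry; apply forallb_map_false; exists b; split; auto. apply posb_false.
          destruct (H b Hb) as [_ H2]; specialize (H2 v Hv). nra. }
      rewrite map_map, length_map. unfold Rdiv. f_equal. f_equal. apply map_ext_in.
      intros a Ha. destruct (H a Ha) as [_ H2]; specialize (H2 v Hv).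
      destruct (posb (e a)) eqn:Ea.
      * apply posb_true in Ea. apply Rmin_right. nra.
      * apply posb_false in Ea. apply Rmin_left. destruct (neg_of _ _ H2 Ea); lra.
    + apply sm_mult; [|apply sm_const].
      apply (sm_sum M U l (fun a v => if posb (e a) then 0 else Fa a v)).
      intros a Ha. destruct (posb (e a)). apply sm_const. apply H; auto.
Qed.

Lemma or_smooth {A} M U (l : list A) (Fa : A -> (nat -> R) -> R) (e : A -> R) :
  open_in M U -> l <> nil ->
  (forall a, In a l -> smooth_on M U (Fa a) /\ forall v, U v -> Fa a v * e a > 0) ->
  smooth_on M U (fun v => agm_or (map (fun a => Fa a v) l)).
Proof. intros HU Hn H.
  destruct (existsb posb (map e l)) eqn:E.
  - rewrite existsb_map_true in E. destruct E as [b [Hb Hpb]]. apply posb_true in Hpb.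
    apply (sm_ext _ _ _ (fun v => sum_list (map (fun a => if posb (e a) then Fa a v else 0) l) * / INR (length l)) HU).
    + intros v Hv. unfold agm_or.
      replace (existsb posb (map (fun a => Fa a v) l)) with true.
      2:{ symmetry; apply existsb_map_true; exists b; split; auto. apply posb_true.
          destruct (H b Hb) as [_ H2]; specialize (H2 v Hv). nra. }
      rewrite map_map, length_map. unfold Rdiv. f_equal. f_equal. apply map_ext_in.
      intros a Ha. destruct (H a Ha) as [_ H2]; specialize (H2 v Hv).
      destruct (posb (e a)) eqn:Ea.
      * apply posb_true in Ea. apply Rmax_left. nra.
      * apply posb_false in Ea. apply Rmax_right. destruct (neg_of _ _ H2 Ea); lra.
    + apply sm_mult; [|apply sm_const].
      apply (sm_sum M U l (fun a v => if posb (e a) then Fa a v else 0)).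
      intros a Ha. destruct (posb (e a)). apply H; auto. apply sm_const.
  - rewrite existsb_map_false in E.
    assert (Hp : forall a v, In a l -> U v -> Fa a v < 0).
    { intros a v Ha Hv. specialize (E a Ha). apply posb_false in E. destruct (H a Ha) as [_ H2].
      specialize (H2 v Hv). destruct (Req_dec (e a) 0) as [Z|Z]; [rewrite Z in H2; lra|].
      assert (e a < 0) by lra. nra. }
    apply (sm_ext _ _ _ (fun v => 1 + (-1) * Rpower (prod_list (map (fun a => 1 - Fa a v) l)) (/ INR (length l))) HU).
    + intros v Hv. unfold agm_or.
      replace (existsb posb (map (fun a => Fa a v) l)) with false
        by (symmetry; apply existsb_map_false; intros a Ha; apply posb_false; specialize (Hp a v Ha Hv); lra).
      rewrite map_map, length_map. ring.
    + apply sm_plus; [apply sm_const|]. apply sm_mult; [apply sm_const|]. apply sm_pow.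
      * intros v Hv. assert (1 < prod_list (map (fun a => 1 - Fa a v) l)); [|lra].
        apply prod_gt1; auto. intros a Ha; specialize (Hp a v Ha Hv); lra.
      * apply (sm_prod M U l (fun a v => 1 - Fa a v)). intros a Ha. apply sm_plus. apply sm_const.
        apply (sm_eqv _ _ _ (fun v => (-1) * Fa a v)); [intro; ring|]. apply sm_mult. apply sm_const. apply H; auto.
Qed.

Definition Ball (M : nat) (x0 : nat -> R) (d : R) : (nat -> R) -> Prop :=
  fun v => forall k, (k < M)%nat -> Rabs (v k - x0 k) < d.

Lemma finite_min N (a : nat -> R) : (forall k, (k < N)%nat -> 0 < a k) ->
  exists e, 0 < e /\ forall k, (k < N)%nat -> e <= a k.
Proof. induction N; intros H.
  - exists 1; split; [lra|]; intros; lia.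
  - destruct IHN as [e [He He']]. intros; apply H; lia.
    exists (Rmin e (a N)); split. apply Rmin_pos; auto; apply H; lia.
    intros k Hk. destruct (Nat.eq_dec k N). subst; apply Rmin_r.
    eapply Rle_trans; [apply Rmin_l|apply He'; lia]. Qed.

Lemma open_ball M x0 d : open_in M (Ball M x0 d).
Proof. intros v Hv. destruct (finite_min M (fun k => d - Rabs (v k - x0 k))) as [e [He He']].
  { intros k Hk; specialize (Hv k Hk); lra. }
  exists e; split; auto. intros y Hy k Hk. specialize (Hy k Hk). specialize (He' k Hk).
  replace (y k - x0 k) with ((y k - v k) + (v k - x0 k)) by ring.
  eapply Rle_lt_trans; [apply Rabs_triang|]. lra. Qed.

Fixpoint stl_ind' (P : stl -> Prop)
  (HT : P STop) (HB : P SBot) (HP : forall i pi, P (SPred i pi))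
  (HN : forall psi, P psi -> P (SNeg psi))
  (HA : forall l, (forall psi, In psi l -> P psi) -> P (SAnd l))
  (HO : forall l, (forall psi, In psi l -> P psi) -> P (SOr l))
  (HG : forall a b psi, P psi -> P (SG a b psi))
  (HF : forall a b psi, P psi -> P (SF a b psi))
  (phi : stl) {struct phi} : P phi :=
  match phi with
  | STop => HT | SBot => HB | SPred i pi => HP i pi
  | SNeg psi => HN psi (stl_ind' P HT HB HP HN HA HO HG HF psi)
  | SAnd l => HA l ((fix go (l : list stl) : forall psi, In psi l -> P psi :=
       match l as l0 return forall psi, In psi l0 -> P psi with
       | nil => fun psi H => False_ind _ H
       | q :: l' => fun psi H => match H with
             | or_introl E => eq_ind q P (stl_ind' P HT HB HP HN HA HO HG HF q) psi E
             | or_intror H' => go l' psi H' end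
       end) l)
  | SOr l => HO l ((fix go (l : list stl) : forall psi, In psi l -> P psi :=
       match l as l0 return forall psi, In psi l0 -> P psi with
       | nil => fun psi H => False_ind _ H
       | q :: l' => fun psi H => match H with
             | or_introl E => eq_ind q P (stl_ind' P HT HB HP HN HA HO HG HF q) psi E
             | or_intror H' => go l' psi H' end
       end) l)
  | SG a b psi => HG a b psi (stl_ind' P HT HB HP HN HA HO HG HF psi)
  | SF a b psi => HF a b psi (stl_ind' P HT HB HP HN HA HO HG HF psi)
  end.

Lemma collect {A} (l : list A) (Q : A -> R -> Prop) :
  (forall a d d', Q a d -> 0 < d' <= d -> Q a d') ->
  (forall a, In a l -> exists d, 0 < d /\ Q a d) ->
  exists d, 0 < d /\ forall a, In a l -> Q a d.
Proof. intros Hm. induction l as [|a l IH]; intros H.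
  - exists 1; split; [lra|]; intros _ [].
  - destruct IH as [d1 [Hd1 H1]]. intros; apply H; right; auto.
    destruct (H a (or_introl eq_refl)) as [d2 [Hd2 H2]].
    exists (Rmin d1 d2); split. apply Rmin_pos; auto.
    intros b [<-|Hb]. apply (Hm _ d2); auto. split. apply Rmin_pos; auto. apply Rmin_r.
    apply (Hm _ d1); auto. split. apply Rmin_pos; auto. apply Rmin_l. Qed.

Lemma nth_idx L p d : In p L -> nth (idx L p) L d = p /\ (idx L p < length L)%nat.
Proof. induction L as [|q L IH]; intros H; [destruct H|]. simpl.
  destruct (pair_eq_dec p q) as [E|E]. subst; split; auto; lia.
  destruct H as [<-|H]; [congruence|]. destruct (IH H); split; auto; lia. Qed.

Lemma Rpower_base1 x : Rpower 1 x = 1.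
Proof. unfold Rpower. rewrite ln_1, Rmult_0_r, exp_0. auto. Qed.

Theorem mainTheorem7
  (tau : R -> Prop) (win : R -> R -> R -> list R) (n : nat)
  (phi : stl) (t : R) (S : nat -> R -> R) (L : list (nat * R)) :
  (* tau is a set of nonnegative times; win t a b enumerates [t+a,t+b] ∩ tau *)
  (forall x, tau x -> 0 <= x) ->
  (forall t0 a b x, In x (win t0 a b) <-> tau x /\ t0 + a <= x <= t0 + b) ->
  (forall t0 a b, NoDup (win t0 a b)) ->
  wf n phi -> tau t ->
  (* the intervals used in evaluating phi at t are nonempty *)
  (forall a b psi t', (inE tau phi t (SG a b psi) t' \/ inE tau phi t (SF a b psi) t')
                      -> win t' a b <> nil) ->
  (* S is a signal with values in [-1,1]^n *)
  (forall i x, (1 <= i <= n)%nat -> tau x -> -1 <= S i x <= 1) ->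
  (* no subformula robustness vanishes at its evaluation time *)
  (forall psi t', inE tau phi t psi t' -> eta win S psi t' <> 0) ->
  (* L enumerates V (without repetition); M = |V| = length L *)
  NoDup L ->
  (forall p, In p L <-> exists pi, inE tau phi t (SPred (fst p) pi) (snd p)) ->
  let M := length L in
  let vS := fun (S' : nat -> R -> R) (k : nat) =>
              S' (fst (nth k L (O, 0))) (snd (nth k L (O, 0))) in
  let H := fun v : nat -> R => eta win (fun i x => v (idx L (i, x))) phi t in
  (forall S' : nat -> R -> R,
     (forall i x, (1 <= i <= n)%nat -> tau x -> -1 <= S' i x <= 1) ->
     eta win S' phi t = H (vS S')) /\
  exists U : (nat -> R) -> Prop,
    open_in M U /\ U (vS S) /\ smooth_on M U H.
Proof.
  intros Hpos Hwin Hnd Hwf Ht Hne HS Hnz HL HLs M vS H.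
  assert (P1 : forall S' psi t', inE tau phi t psi t' ->
            eta win S' psi t' = eta win (fun i x => vS S' (idx L (i, x))) psi t').
  { intros S' psi.
    induction psi as [ | | i pi | psi IH | l IH | l IH | a b psi IH | a b psi IH ] using stl_ind';
      intros t' Hin; simpl.
    - auto.
    - auto.
    - unfold vS. destruct (nth_idx L (i, t') (O,0)) as [E _].
      { apply HLs. exists pi; auto. }
      rewrite E. reflexivity.
    - f_equal. apply IH. eapply E_neg; eauto.
    - f_equal. apply map_ext_in. intros p Hp. apply IH; auto. eapply E_and; eauto.
    - f_equal. apply map_ext_in. intros p Hp. apply IH; auto. eapply E_or; eauto.
    - f_equal. apply map_ext_in. intros t'' Ht''. apply Hwin in Ht'' as [Ht1 Ht2].
      apply IH. eapply E_G; eauto.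
    - f_equal. apply map_ext_in. intros t'' Ht''. apply Hwin in Ht'' as [Ht1 Ht2].
      apply IH. eapply E_F; eauto. }
  set (x0 := vS S).
  assert (Mono : forall d d' v, 0 < d' <= d -> Ball M x0 d' v -> Ball M x0 d v).
  { intros d d' v Hd Hv k Hk. specialize (Hv k Hk). lra. }
  assert (P2 : forall psi t', inE tau phi t psi t' -> exists d, 0 < d /\
     smooth_on M (Ball M x0 d) (fun v => eta win (fun i x => v (idx L (i, x))) psi t') /\
     forall v, Ball M x0 d v -> eta win (fun i x => v (idx L (i, x))) psi t' * eta win S psi t' > 0).
  { intros psi.
    induction psi as [ | | i pi | psi IH | l IH | l IH | a b psi IH | a b psi IH ] using stl_ind';
      intros t' Hin.
    - exists 1; split; [lra|split].
      + apply (sm_eqv _ _ _ (fun _ => 1)); [intro; reflexivity|apply sm_const].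
      + intros; simpl; lra.
    - exists 1; split; [lra|split].
      + apply (sm_eqv _ _ _ (fun _ => -1)); [intro; reflexivity|apply sm_const].
      + intros; simpl; lra.
    - destruct (nth_idx L (i, t') (O,0)) as [E Hk].
      { apply HLs. exists pi; auto. }
      pose proof (Hnz _ _ Hin) as Hz. simpl in Hz.
      assert (Ha : S i t' - pi <> 0) by (intro Z; apply Hz; rewrite Z; unfold Rdiv; ring).
      exists (Rabs (S i t' - pi)); split; [apply Rabs_pos_lt; auto|split].
      + apply (sm_eqv _ _ _ (fun v => (v (idx L (i, t')) + - pi) * / 2)).
        { intro; simpl; unfold Rdiv; ring. }
        apply sm_mult; [|apply sm_const]. apply sm_plus; [|apply sm_const]. apply sm_proj; auto.
      + intros v Hv. specialize (Hv _ Hk). unfold x0, vS in Hv. rewrite E in Hv. simpl in Hv. simpl.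
        unfold Rdiv.
        destruct (Rcase_abs (S i t' - pi)) as [N|P].
        * rewrite (Rabs_left _ N) in Hv. apply Rabs_def2 in Hv. nra.
        * rewrite (Rabs_right _ P) in Hv. apply Rabs_def2 in Hv. nra.
    - destruct (IH t') as [d [Hd [Hs Hg]]]. eapply E_neg; eauto.
      exists d; split; auto; split.
      + apply (sm_eqv _ _ _ (fun v => (-1) * eta win (fun i x => v (idx L (i, x))) psi t')).
        { intro; simpl; ring. }
        apply sm_mult; [apply sm_const|auto].
      + intros v Hv. specialize (Hg v Hv). simpl. nra.
    - destruct (collect l (fun psi d => smooth_on M (Ball M x0 d) (fun v => eta win (fun i x => v (idx L (i, x))) psi t') /\
          forall v, Ball M x0 d v -> eta win (fun i x => v (idx L (i, x))) psi t' * eta win S psi t' > 0))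
        as [d [Hd Hall]].
      { intros p d d' [Q1 Q2] Hdd. split. eapply sm_restrict; eauto. intros; apply Q2; eauto. }
      { intros p Hp. apply IH; auto. eapply E_and; eauto. }
      assert (Hn : l <> nil).
      { intro; subst. apply (Hnz _ _ Hin). simpl. unfold agm_and; simpl. unfold prod_list; simpl.
        rewrite Rpower_base1; ring. }
      exists d; split; auto; split.
      + apply (and_smooth M (Ball M x0 d) l (fun psi v => eta win (fun i x => v (idx L (i, x))) psi t')
                (fun psi => eta win S psi t')); auto. apply open_ball.
      + intros v Hv. simpl. apply and_sign; auto. intros p Hp. apply Hall; auto.
    - destruct (collect l (fun psi d => smooth_on M (Ball M x0 d) (fun v => eta win (fun i x => v (idx L (i, x))) psi t') /\
          forall v, Ball M x0 d v -> eta win (fun i x => v (idx L (i, x))) psi t' * eta win S psi t' > 0))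
        as [d [Hd Hall]].
      { intros p d d' [Q1 Q2] Hdd. split. eapply sm_restrict; eauto. intros; apply Q2; eauto. }
      { intros p Hp. apply IH; auto. eapply E_or; eauto. }
      assert (Hn : l <> nil).
      { intro; subst. apply (Hnz _ _ Hin). simpl. unfold agm_or; simpl. unfold prod_list; simpl.
        rewrite Rpower_base1; ring. }
      exists d; split; auto; split.
      + apply (or_smooth M (Ball M x0 d) l (fun psi v => eta win (fun i x => v (idx L (i, x))) psi t')
                (fun psi => eta win S psi t')); auto. apply open_ball.
      + intros v Hv. simpl. apply or_sign; auto. intros p Hp. apply Hall; auto.
    - destruct (collect (win t' a b) (fun t'' d => smooth_on M (Ball M x0 d) (fun v => eta win (fun i x => v (idx L (i, x))) psi t'') /\
          forall v, Ball M x0 d v -> eta win (fun i x => v (idx L (i, x))) psi t'' * eta win S psi t'' > 0))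
        as [d [Hd Hall]].
      { intros p d d' [Q1 Q2] Hdd. split. eapply sm_restrict; eauto. intros; apply Q2; eauto. }
      { intros t'' Ht''. apply Hwin in Ht'' as [Ht1 Ht2]. apply IH. eapply E_G; eauto. }
      assert (Hn : win t' a b <> nil) by (apply (Hne a b psi); auto).
      exists d; split; auto; split.
      + apply (and_smooth M (Ball M x0 d) (win t' a b) (fun t'' v => eta win (fun i x => v (idx L (i, x))) psi t'')
                (fun t'' => eta win S psi t'')); auto. apply open_ball.
      + intros v Hv. simpl. apply and_sign; auto. intros p Hp. apply Hall; auto.
    - destruct (collect (win t' a b) (fun t'' d => smooth_on M (Ball M x0 d) (fun v => eta win (fun i x => v (idx L (i, x))) psi t'') /\
          forall v, Ball M x0 d v -> eta win (fun i x => v (idx L (i, x))) psi t'' * eta win S psi t'' > 0))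
        as [d [Hd Hall]].
      { intros p d d' [Q1 Q2] Hdd. split. eapply sm_restrict; eauto. intros; apply Q2; eauto. }
      { intros t'' Ht''. apply Hwin in Ht'' as [Ht1 Ht2]. apply IH. eapply E_F; eauto. }
      assert (Hn : win t' a b <> nil) by (apply (Hne a b psi); auto).
      exists d; split; auto; split.
      + apply (or_smooth M (Ball M x0 d) (win t' a b) (fun t'' v => eta win (fun i x => v (idx L (i, x))) psi t'')
                (fun t'' => eta win S psi t'')); auto. apply open_ball.
      + intros v Hv. simpl. apply or_sign; auto. intros p Hp. apply Hall; auto. }
  destruct (P2 phi t (E_root tau phi t)) as [d [Hd [Hsm Hsg]]].
  split.
  - intros S' _. rewrite (P1 S' phi t (E_root tau phi t)). reflexivity.
  - exists (Ball M x0 d). split; [apply open_ball|split].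
    + intros k _. rewrite Rminus_diag, Rabs_R0; auto.
    + exact Hsm.
Qed.
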